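(* Let $m,h\in\mathbb N$ and let $\mathcal P_{m,h}$ be the class of functions on $\mathbb R^h$ of the form $$p(y_1,\dots,y_h)=b_1y_1^{e_1}+b_2y_2^{e_2}+\dots+b_hy_h^{e_h},$$ where $0=e_1<e_2<\dots<e_h$ are integers and $b_1,\dots,b_h\in\mathbb Z$ satisfy $|b_i|\le m$ for all $i$ and $(b_1,\dots,b_h)\ne(0,\dots,0)$. Let $\eta>1$ be transcendental. Then there exist constants $\delta>0$ and $\varepsilon>0$, depending only on $\eta,m,h$, such that $$|p(y_1,\dots,y_h)|\ge\varepsilon$$ for all $p\in\mathcal P_{m,h}$ and all $(y_1,\dots,y_h)\in\mathbb R^h$ satisfying $$\frac{y_j^{e_j}}{y_i^{e_i}}\in\Big[(\eta-\delta)^{e_j-e_i},(\eta+\delta)^{e_j-e_i}\Big]\qquad\text{for all }1\le i<j\le h$$ (here $e_1,\dots,e_h$ are the exponents of the particular $p$). *)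

(* Defs.v *)
From HB Require Import structures.
From mathcomp Require Import all_boot all_order all_algebra.
From mathcomp Require Import reals.
Set Implicit Arguments. Unset Strict Implicit. Unset Printing Implicit Defensive.
Import Order.TTheory GRing.Theory Num.Theory.
Local Open Scope ring_scope.

Definition transcendental (R : realType) (x : R) : Prop :=
  forall p : {poly int}, p != 0 -> ~~ root (map_poly (fun z : int => z%:~R) p) x.

(* Main.v *)
Require Import Defs.
From HB Require Import structures.
From mathcomp Require Import all_boot all_order all_algebra.
From mathcomp Require Import reals.
From mathcomp Require Import lra zify.
Import Order.TTheory GRing.Theory Num.Theory.
Local Open Scope ring_scope.

Section Aux.
Variable R : realType.

Lemma powdiff (x y : R) (d : nat) : 0 <= x -> x <= y -> 1 <= y ->
  y ^+ d - x ^+ d <= d%:R * y ^+ d * (y - x).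
Proof.
move=> x0 xy y1; elim: d => [|d IH]; first by rewrite !expr0 subrr mul0r mul0r.
have B0 : 0 <= x ^+ d by rewrite exprn_ge0.
have BA : x ^+ d <= y ^+ d by rewrite lerXn2r // ?nnegrE; lra.
rewrite !exprS -natr1.
set A := y ^+ d in IH BA *; set B := x ^+ d in IH B0 BA *; set D := d%:R in IH *.
have D0 : 0 <= D by rewrite /D ler0n.
have h1 : y * (A - B) <= y * (D * A * (y - x)) by rewrite ler_wpM2l //; lra.
have h2 : B * (y - x) <= A * (y - x) by rewrite ler_wpM2r //; lra.
have h3 : A * (y - x) <= y * A * (y - x).
  rewrite ler_wpM2r //; first lra.
  by rewrite ler_peMl //; lra.
nra.
Qed.

Lemma bern (t : R) (n : nat) : 0 <= t -> 1 + n%:R * t <= (1 + t) ^+ n.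
Proof.
move=> t0; elim: n => [|n IH]; first by rewrite mul0r addr0 expr0.
rewrite exprS -natr1.
have : 0 <= n%:R * t by rewrite mulr_ge0 ?ler0n.
nra.
Qed.

Lemma pow_big (a M : R) : 1 < a -> exists K : nat, M <= a ^+ K.
Proof.
move=> a1.
have t0 : 0 <= `|M| / (a - 1) by rewrite divr_ge0 // ?normr_ge0; lra.
exists (Num.bound (`|M| / (a - 1))).
have := archi_boundP t0; set K := Num.bound _ => hK.
have h := @bern (a - 1) K (ltac:(lra)).
have e : 1 + (a - 1) = a by rewrite addrC subrK.
rewrite e in h.
have hM : M <= `|M| by apply: ler_norm.
have : `|M| < K%:R * (a - 1) by rewrite -ltr_pdivrMr //; lra.
lra.
Qed.

Lemma zbound (eta dl z : R) (d N : nat) : 1 < eta -> 0 <= dl <= 1 -> (d <= N)%N ->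
  (eta - dl) ^+ d <= z <= (eta + dl) ^+ d -> `|z - eta ^+ d| <= N%:R * (eta + 1) ^+ N * dl.
Proof.
move=> e1 /andP[d0 d1] dN /andP[z1 z2].
have h1 := @powdiff eta (eta + dl) d (ltac:(lra)) (ltac:(lra)) (ltac:(lra)).
have h2 := @powdiff (eta - dl) eta d (ltac:(lra)) (ltac:(lra)) (ltac:(lra)).
have c0 : 0 <= eta ^+ d by rewrite exprn_ge0 //; lra.
have c1 : eta ^+ d <= (eta + dl) ^+ d by rewrite lerXn2r // ?nnegrE; lra.
have c2 : (eta + dl) ^+ d <= (eta + 1) ^+ d by rewrite lerXn2r // ?nnegrE; lra.
have c3 : (eta + 1) ^+ d <= (eta + 1) ^+ N by rewrite ler_weXn2l //; lra.
have c4 : d%:R <= N%:R :> R by rewrite ler_nat.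
have c5 : 0 <= d%:R :> R by rewrite ler0n.
set D := d%:R in h1 h2 c4 c5 *; set NN := N%:R in c4 *.
set A := eta ^+ d in h1 h2 c0 c1 *; set C := (eta + dl) ^+ d in h1 c1 c2 z2 *.
set E := (eta + 1) ^+ d in c2 c3 *; set F := (eta + 1) ^+ N in c3 *.
have e1' : eta + dl - eta = dl by rewrite addrC addKr.
have e2' : eta - (eta - dl) = dl by rewrite opprB addrC subrK.
rewrite e1' in h1; rewrite e2' in h2.
have k1 : D * C * dl <= NN * F * dl.
  rewrite ler_wpM2r //; apply: ler_pM => //; [by apply: le_trans c1|lra].
have k2 : D * A * dl <= D * C * dl.
  by rewrite ler_wpM2r // ler_wpM2l.
rewrite ler_norml; apply/andP; split; lra.
Qed.

Lemma unif (T : finType) (P : T -> R -> R -> Prop) :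
  (forall t d e d' e', 0 < d' <= d -> 0 < e' <= e -> P t d e -> P t d' e') ->
  (forall t, exists d e, 0 < d /\ 0 < e /\ P t d e) ->
  exists d e, 0 < d /\ 0 < e /\ forall t, P t d e.
Proof.
move=> mono ex.
suff [d [e [d0 [e0 H]]]] : exists d e, 0 < d /\ 0 < e /\ forall t, t \in enum T -> P t d e.
  by exists d, e; split => // ; split => // t; apply: H; rewrite mem_enum.
elim: (enum T) => [|t s [d [e [d0 [e0 H]]]]]; first by exists 1, 1.
have [d' [e' [d0' [e0' H']]]] := ex t.
exists (Order.min d d'), (Order.min e e'); split; first by rewrite lt_min d0 d0'.
split; first by rewrite lt_min e0 e0'.
move=> u; rewrite in_cons => /orP[/eqP->|us].
  apply: (mono t d' e') => //; rewrite ?lt_min ?ge_min ?d0 ?d0' ?e0 ?e0' ?lexx ?orbT //.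
apply: (mono u d e) => //; last by apply: H.
  by rewrite lt_min ge_min d0 d0' lexx.
by rewrite lt_min ge_min e0 e0' lexx.
Qed.
End Aux.
Section Aux2.
Variable R : realType.

Lemma poly_part (eta : R) (n1 : nat) (d : 'I_n1 -> nat) (c : 'I_n1 -> int) :
  transcendental eta ->
  (forall i j : 'I_n1, (i < j)%N -> (d i < d j)%N) -> (exists i, c i != 0) ->
  \sum_(i < n1) (c i)%:~R * eta ^+ (d i) != 0.
Proof.
move=> tr dinc [j cj].
pose p : {poly int} := \sum_(i < n1) (c i)%:P * 'X^(d i).
have pn : p != 0.
  apply/eqP => /(congr1 (fun q : {poly int} => q`_(d j))).
  rewrite coef0 coef_sum (bigD1 j) //= coefCM coefXn eqxx mulr1 big1 ?addr0.
    by move/eqP; rewrite (negbTE cj).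
  move=> i ij; rewrite coefCM coefXn.
  have -> : (d j == d i) = false.
    apply/negbTE; case: (ltngtP i j) => [h|h|h].
    - by rewrite gtn_eqF ?dinc.
    - by rewrite ltn_eqF ?dinc.
    - by move: ij; rewrite (val_inj h) eqxx.
  by rewrite mulr0.
have := tr p pn; rewrite /root.
suff -> : (map_poly (fun z : int => z%:~R) p).[eta] = \sum_(i < n1) (c i)%:~R * eta ^+ (d i) by [].
have -> : (fun z : int => z%:~R) = (@intmul R 1) by [].
rewrite /p raddf_sum horner_sum; apply: eq_bigr => i _.
by rewrite /= mul_polyC map_polyZ map_polyXn hornerZ hornerXn.
Qed.
End Aux2.
Section Aux3.
Variable R : realType.

Lemma single (eta : R) (n1 N m : nat) (d : 'I_n1 -> nat) (c : 'I_n1 -> int) :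
  1 < eta -> transcendental eta ->
  (forall i, (d i <= N)%N) -> (forall i, `|c i| <= m%:Z) ->
  exists d0 eps, 0 < d0 /\ 0 < eps /\ forall dl, 0 <= dl <= d0 -> forall Y : nat -> R, 0 < Y 0%N ->
   (forall i : 'I_n1, (eta - dl) ^+ (d i) <= Y i / Y 0%N <= (eta + dl) ^+ (d i)) ->
   (forall i j : 'I_n1, (i < j)%N -> (d i < d j)%N) -> (exists i, c i != 0) ->
   eps * Y 0%N <= `|\sum_(i < n1) (c i)%:~R * Y i|.
Proof.
move=> e1 tr dN cm.
set P0 := \sum_(i < n1) (c i)%:~R * eta ^+ (d i).
case: (eqVneq P0 0) => [P00|P0n].
  exists 1, 1; split => //; split => // dl _ Y _ _ dinc cnz.
  by have := @poly_part R eta n1 d c tr dinc cnz; rewrite -/P0 P00 eqxx.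
set eps := `|P0| / 2.
set K := N%:R * (eta + 1) ^+ N.
set C := (n1 * m)%:R * K.
have K0 : 0 <= K by rewrite mulr_ge0 ?ler0n // exprn_ge0 //; lra.
have C0 : 0 <= C by rewrite mulr_ge0 ?ler0n.
have eps0 : 0 < eps by rewrite divr_gt0 // normr_gt0.
have C1 : 0 < C + 1 by lra.
exists (Order.min 1 (eps / (C + 1))), eps; split.
  by rewrite lt_min ltr01 divr_gt0.
split => // dl /andP[dl0]; rewrite le_min => /andP[dl1 dlC] Y Y0 hY _ _.
have dlC' : C * dl <= eps.
  move: dlC; rewrite ler_pdivlMr // => h; nra.
have E : \sum_(i < n1) (c i)%:~R * Y i = Y 0%N * \sum_(i < n1) (c i)%:~R * (Y i / Y 0%N).
  rewrite mulr_sumr; apply: eq_bigr => i _.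
  by rewrite mulrCA [Y 0%N * _]mulrC divfK // gt_eqF.
rewrite E normrM (gtr0_norm Y0) mulrC; apply: ler_wpM2l; first exact: ltW.
set D := \sum_(i < n1) (c i)%:~R * (Y i / Y 0%N - eta ^+ d i).
have SD : \sum_(i < n1) (c i)%:~R * (Y i / Y 0%N) = P0 + D.
  rewrite /P0 /D -big_split /=; apply: eq_bigr => i _.
  by rewrite -mulrDr addrC subrK.
have HD : `|D| <= C * dl.
  apply: (le_trans (ler_norm_sum _ _ _)).
  apply: (@le_trans _ _ (\sum_(i < n1) (m%:R * (K * dl)))).
    apply: ler_sum => i _; rewrite normrM; apply: ler_pM => //.
      by rewrite -intr_norm -[m%:R]/(m%:~R) ler_int.
    by rewrite /K; apply: zbound => //; rewrite dl0 dl1.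
  by rewrite sumr_const card_ord -mulr_natl /C natrM; lra.
rewrite SD.
have h1 := lerB_normD P0 D.
have h2 : `|P0| = eps * 2 by rewrite /eps divfK // pnatr_eq0.
lra.
Qed.
End Aux3.
Section Aux4.
Variable R : realType.

Lemma finite_case (eta : R) (m n1 N : nat) : 1 < eta -> transcendental eta ->
 exists d0 eps, 0 < d0 /\ 0 < eps /\ forall dl, 0 <= dl <= d0 ->
   forall (e : nat -> nat) (b : nat -> int) (Y : nat -> R),
   (forall i j, (i < j < n1)%N -> (e i < e j)%N) ->
   (forall i, (i < n1)%N -> `|b i| <= m%:Z) ->
   (exists2 i, (i < n1)%N & b i != 0) ->
   (forall i, (i < n1)%N -> (e i - e 0 <= N)%N) ->
   0 < Y 0%N ->
   (forall i, (0 < i < n1)%N ->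
      (eta - dl) ^+ (e i - e 0) <= Y i / Y 0%N <= (eta + dl) ^+ (e i - e 0)) ->
   eps * Y 0%N <= `|\sum_(i < n1) (b i)%:~R * Y i|.
Proof.
move=> e1 tr.
pose T := ({ffun 'I_n1 -> 'I_N.+1} * {ffun 'I_n1 -> 'I_(m+m).+1})%type.
pose P := fun (t : T) (d0 eps : R) => forall dl, 0 <= dl <= d0 -> forall Y : nat -> R,
  0 < Y 0%N ->
  (forall i : 'I_n1, (eta - dl) ^+ (t.1 i) <= Y i / Y 0%N <= (eta + dl) ^+ (t.1 i)) ->
  (forall i j : 'I_n1, (i < j)%N -> (t.1 i < t.1 j)%N) ->
  (exists i, ((t.2 i)%:Z - m%:Z) != 0) ->
  eps * Y 0%N <= `|\sum_(i < n1) ((t.2 i)%:Z - m%:Z)%:~R * Y i|.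
have [d0 [eps [d00 [eps0 H]]]] : exists d e, 0 < d /\ 0 < e /\ forall t, P t d e.
  apply: unif.
    move=> t d e d' e' /andP[d'0 d'd] /andP[e'0 e'e] Ht dl /andP[dl0 dld] Y Y0 hY hinc hnz.
    apply: le_trans (Ht dl _ Y Y0 hY hinc hnz).
      by rewrite ler_wpM2r // ltW.
    by rewrite dl0 (le_trans dld d'd).
  move=> t.
  have hd : forall i : 'I_n1, ((fun i => (t.1 i : nat)) i <= N)%N.
    by move=> i /=; rewrite -ltnS ltn_ord.
  have hc : forall i : 'I_n1, `|(fun i => (t.2 i)%:Z - m%:Z) i| <= m%:Z.
    by move=> i /=; have := ltn_ord (t.2 i); move: (nat_of_ord (t.2 i)) => k; lia.
  have [d [e [d0 [e0 Hs]]]] := @single R eta n1 N m _ _ e1 tr hd hc.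
  exists d, e; split => //; split => //.
exists d0, eps; split => //; split => // dl hdl e b Y einc bm [j jn bj] eN Y0 hY.
pose t : T := ([ffun i : 'I_n1 => inord (e i - e 0)], [ffun i : 'I_n1 => inord (absz (b i + m%:Z)%R)]).
have t1E : forall i : 'I_n1, (t.1 i : nat) = (e i - e 0)%N.
  by move=> i; rewrite /t /= ffunE inordK // ltnS eN.
have t2E : forall i : 'I_n1, (t.2 i)%:Z - m%:Z = b i.
  move=> i; rewrite /t /= ffunE inordK; first by have := bm i (ltn_ord i); lia.
  by have := bm i (ltn_ord i); lia.
have e0le : forall i, (i < n1)%N -> (e 0 <= e i)%N.
  move=> [|i] hi //; apply: ltnW; apply: einc; by rewrite hi.
have h1 : forall i : 'I_n1, (eta - dl) ^+ (t.1 i) <= Y i / Y 0%N <= (eta + dl) ^+ (t.1 i).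
  move=> i; rewrite t1E; case: (posnP i) => [i0|ip].
    by rewrite i0 subnn !expr0 divff ?gt_eqF // lexx.
  by apply: hY; rewrite ip ltn_ord.
have h2 : forall i k : 'I_n1, (i < k)%N -> (t.1 i < t.1 k)%N.
  move=> i k ik; rewrite !t1E.
  have hk := ltn_ord k.
  have := einc i k; rewrite ik hk => /(_ isT) eik.
  have := e0le i (ltn_ord i); lia.
have h3 : exists i, ((t.2 i)%:Z - m%:Z) != 0 by exists (Ordinal jn); rewrite t2E.
have h := H t dl hdl Y Y0 h1 h2 h3.
apply: (le_trans h); rewrite le_eqVlt; apply/orP; left; apply/eqP.
by congr (`| _ |); apply: eq_bigr => i _; rewrite t2E.
Qed.
End Aux4.
Definition good {R : realType} (eta : R) (m k : nat) (dl : R) (e : nat -> nat) (b : nat -> int) (Y : nat -> R) : Prop :=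
 [/\ (forall i j, (i < j < k)%N -> (e i < e j)%N),
     (forall i, (i < k)%N -> `|b i| <= m%:Z),
     (exists2 i, (i < k)%N & b i != 0),
     (forall i, (i < k)%N -> 0 < Y i) &
     (forall i j, (i < j < k)%N -> (eta - dl) ^+ (e j - e i) <= Y j / Y i <= (eta + dl) ^+ (e j - e i))].

Lemma good_shift (R : realType) (eta : R) (m k k' s : nat) dl e b Y :
  good eta m k dl e b Y -> (k' + s <= k)%N -> (exists2 i, (i < k')%N & b (i + s)%N != 0) ->
  good eta m k' dl (fun i => e (i + s)%N) (fun i => b (i + s)%N) (fun i => Y (i + s)%N).
Proof.
move=> [h1 h2 h3 h4 h5] hk hz; split => //.
- move=> i j /andP[ij jk]; apply: h1; apply/andP; split; lia.
- move=> i ik; apply: h2; lia.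
- move=> i ik; apply: h4; lia.
- move=> i j /andP[ij jk]; apply: h5; apply/andP; split; lia.
Qed.

Lemma good_restr (R : realType) (eta : R) (m k k' : nat) dl e b Y :
  good eta m k dl e b Y -> (k' <= k)%N -> (exists2 i, (i < k')%N & b i != 0) ->
  good eta m k' dl e b Y.
Proof.
move=> [h1 h2 h3 h4 h5] hk hz; split => //.
- move=> i j /andP[ij jk]; apply: h1; apply/andP; split; lia.
- move=> i ik; apply: h2; lia.
- move=> i ik; apply: h4; lia.
- move=> i j /andP[ij jk]; apply: h5; apply/andP; split; lia.
Qed.

Lemma split_sum (R : realType) (F : nat -> R) (n1 j1 : nat) : (j1 <= n1)%N ->
  \sum_(i < n1) F i = \sum_(i < j1) F i + \sum_(i < n1 - j1) F (i + j1)%N.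
Proof.
move=> h; rewrite -(big_mkord xpredT F) -(big_mkord xpredT F) -(big_mkord xpredT (fun i => F (i + j1)%N)).
rewrite (big_cat_nat (leq0n j1) h) /=; congr (_ + _).
by rewrite -{1}[j1]add0n big_addn.
Qed.

Lemma gap_step (a b c K i : nat) : (a <= b)%N -> (b < c)%N -> (c - b <= K)%N ->
  (b - a <= i * K)%N -> (c - a <= i.+1 * K)%N.
Proof. rewrite mulSn; lia. Qed.

Lemma main_ind (R : realType) (eta : R) (m n : nat) : 1 < eta -> transcendental eta ->
 exists d0 eps, [/\ 0 < d0, d0 <= (eta - 1) / 2, 0 < eps, eps <= 1 &
  forall k, (k <= n)%N -> forall dl, 0 <= dl <= d0 -> forall e b Y,
    good eta m k dl e b Y -> eps * Y 0%N <= `|\sum_(i < k) (b i)%:~R * Y i|].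
Proof.
move=> e1 tr; elim: n => [|n [d1 [eps1 [d10 d1le eps10 eps1le IH]]]].
  exists ((eta - 1) / 2), 1; split => //; first by rewrite divr_gt0 //; lra.
  move=> k; rewrite leqn0 => /eqP -> dl _ e b Y [_ _ [i] //].
set a0 := (eta + 1) / 2.
have a01 : 1 < a0 by rewrite /a0 ltr_pdivlMr //; lra.
have [K hK] := @pow_big R a0 (((m * n.+1)%:R + 1) / eps1) a01.
have [d2 [eps2 [d20 [eps20 Hf]]]] := @finite_case R eta m n.+1 (n * K) e1 tr.
exists (Order.min d1 d2), (Order.min eps1 eps2); split.
- by rewrite lt_min d10 d20.
- by rewrite ge_min d1le.
- by rewrite lt_min eps10 eps20.
- by rewrite ge_min eps1le.
move=> k; rewrite leq_eqVlt ltnS => /orP[/eqP->|kn] dl /andP[dl0];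
  rewrite le_min => /andP[dld1 dld2] e b Y g; last first.
  apply: le_trans (IH k kn dl _ e b Y g); last by rewrite dl0 dld1.
  apply: ler_wpM2r; last by rewrite ge_min lexx.
  by case: g => _ _ [i ik _] h4 _; apply: ltW; apply: h4; exact: leq_ltn_trans (leq0n i) ik.
case: (g) => einc bm bnz Ypos hY.
have Y0 : 0 < Y 0%N by apply: Ypos.
have epsle : Order.min eps1 eps2 <= eps1 by rewrite ge_min lexx.
have epsle2 : Order.min eps1 eps2 <= eps2 by rewrite ge_min lexx orbT.
have aa0 : a0 <= eta - dl by rewrite /a0; lra.
have Ymono : forall i j, (i <= j < n.+1)%N -> Y i <= Y j.
  move=> i j /andP[ij jn]; case: (ltngtP i j) ij => // [ij _|-> //].
  have := hY i j; rewrite ij jn => /(_ isT) /andP[h _].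
  have h1 : 1 <= (eta - dl) ^+ (e j - e i) by apply: exprn_ege1; lra.
  have Yi : 0 < Y i by apply: Ypos; exact: ltn_trans ij jn.
  have : 1 <= Y j / Y i by apply: le_trans h.
  by rewrite ler_pdivlMr // mul1r.
case: (boolP [exists j : 'I_n, (K < e j.+1 - e j)%N]) => [/existsP[j gj]|nogap].
  have jn := ltn_ord j.
  have jn1 : (j.+1 <= n.+1)%N by rewrite ltnS ltnW.
  rewrite (@split_sum R (fun i => (b i)%:~R * Y i) n.+1 j.+1 jn1) /=.
  set L := \sum_(i < j.+1) _.
  set U := \sum_(i < n.+1 - j.+1) _.
  have dlr : 0 <= dl <= d1 by rewrite dl0 dld1.
  have Y0j : Y 0%N <= Y j by apply: Ymono; rewrite leq0n /= ltnW // ltnS.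
  case: (boolP [exists i : 'I_(n.+1 - j.+1), b (i + j.+1)%N != 0]) => [/existsP[i0 bi0] | nz].
    have hs : (n.+1 - j.+1 + j.+1 <= n.+1)%N by rewrite subnK.
    have gU := @good_shift R eta m n.+1 (n.+1 - j.+1) j.+1 dl e b Y g hs
       (ex_intro2 _ _ (nat_of_ord i0) (ltn_ord i0) bi0).
    have kle : (n.+1 - j.+1 <= n)%N by rewrite subSS leq_subr.
    have hU := IH _ kle dl dlr _ _ _ gU; rewrite /= add0n -/U in hU.
    have hL : `|L| <= (m * n.+1)%:R * Y j.
      apply: le_trans (ler_norm_sum _ _ _) _.
      apply: (@le_trans _ _ (\sum_(i < j.+1) (m%:R * Y j))).
        apply: ler_sum => i _.
        have il : (i < n.+1)%N by apply: leq_trans (ltn_ord i) _.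
        rewrite normrM (gtr0_norm (Ypos i il)); apply: ler_pM.
        - exact: normr_ge0.
        - exact: ltW (Ypos i il).
        - by rewrite -intr_norm -[m%:R]/(m%:~R) ler_int; apply: bm.
        - by apply: Ymono; rewrite -ltnS ltn_ord /=.
      rewrite sumr_const card_ord natrM -[X in X <= _]mulr_natl.
      have q1 : (j.+1)%:R <= (n.+1)%:R :> R by rewrite ler_nat.
      have q2 : 0 <= m%:R :> R by rewrite ler0n.
      have q3 : 0 <= Y j by apply: ltW; apply: lt_le_trans Y0j.
      have q5 : 0 <= m%:R * Y j by rewrite mulr_ge0.
      nra.
    have hY1 : a0 ^+ K * Y j <= Y j.+1.
      have := hY j j.+1; rewrite ltnSn /= ltnS jn => /(_ isT) /andP[h _].
      have Yj : 0 < Y j by apply: lt_le_trans Y0j.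
      rewrite -ler_pdivlMr //; apply: le_trans h.
      apply: (@le_trans _ _ (a0 ^+ (e j.+1 - e j))).
        by apply: ler_weXn2l; [apply: ltW | apply: ltnW].
      by apply: lerXn2r; rewrite ?nnegrE //; lra.
    have hK' : (m * n.+1)%:R + 1 <= a0 ^+ K * eps1 by rewrite -ler_pdivrMr.
    have hUL := lerB_normD U L.
    rewrite addrC.
    set P := a0 ^+ K in hY1 hK'.
    set Mc := (m * n.+1)%:R in hL hK'.
    have Yj0 : 0 <= Y j by apply: ltW; apply: lt_le_trans Y0j.
    have p1 : eps1 * (P * Y j) <= eps1 * Y j.+1 by apply: ler_wpM2l => //; apply: ltW.
    have p2 : (Mc + 1) * Y j <= (P * eps1) * Y j by apply: ler_wpM2r.
    set ep := Order.min eps1 eps2.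
    have ep0 : 0 < ep by rewrite lt_min eps10 eps20.
    have p3 : ep * Y 0%N <= 1 * Y 0%N by apply: ler_wpM2r; [apply: ltW | apply: le_trans epsle eps1le].
    rewrite mul1r in p3.
    have e3 : eps1 * (P * Y j) = (P * eps1) * Y j by rewrite mulrA (mulrC eps1).
    lra.
  have U0 : U = 0.
    apply: big1 => i _; move/existsPn: nz => /(_ i); rewrite negbK => /eqP ->.
    by rewrite mul0r.
  rewrite U0 addr0.
  have gL : good eta m j.+1 dl e b Y.
    apply: good_restr g jn1 _.
    case: bnz => i il bi; case: (ltnP i j.+1) => [ij | ji].
      by exists i.
    have il' : (i - j.+1 < n.+1 - j.+1)%N by rewrite ltn_sub2r.
    move/existsPn: nz => /(_ (Ordinal il')) /=; rewrite subnK // => /negP; by case.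
  have hL := IH j.+1 jn dl dlr e b Y gL.
  apply: le_trans hL; apply: ler_wpM2r => //; exact: ltW.
have gaps : forall j, (j < n)%N -> (e j.+1 - e j <= K)%N.
  move=> j jn; move/existsPn: nogap => /(_ (Ordinal jn)) /=; by rewrite -leqNgt.
have eN : forall i, (i < n.+1)%N -> (e i - e 0 <= n * K)%N.
  suff H : forall i, (i < n.+1)%N -> (e i - e 0 <= i * K)%N.
    move=> i ilt; apply: leq_trans (H i ilt) _; rewrite leq_mul2r; apply/orP; right; by rewrite -ltnS.
  elim=> [|i IHi] ilt; first by rewrite subnn.
  have h0 : (e 0 <= e i)%N.
    case: i IHi ilt => [|i] IHi ilt //.
    by apply: ltnW; apply: einc; rewrite ltn0Sn /= (ltnW ilt).
  have h1 : (e i < e i.+1)%N by apply: einc; rewrite ltnSn ilt.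
  exact: gap_step h0 h1 (gaps i ilt) (IHi (ltnW ilt)).
apply: le_trans (Hf dl _ e b Y _ bm bnz eN Y0 _); last first.
- move=> i /andP[i0 iln]; apply: hY; by rewrite i0.
- move=> i j ijk; apply: einc; exact ijk.
- by rewrite dl0.
by rewrite ler_wpM2r // ltW.
Qed.

Theorem lemma2p1 (R : realType) (m h : nat) (eta : R) :
  1 < eta -> transcendental eta ->
  exists delta : R, exists eps : R, 0 < delta /\ 0 < eps /\
    forall (e : 'I_h -> nat) (b : 'I_h -> int),
      (forall i : 'I_h, nat_of_ord i = 0%N -> e i = 0%N) ->
      (forall i j : 'I_h, (i < j)%N -> (e i < e j)%N) ->
      (forall i : 'I_h, `|b i| <= m%:Z) ->
      (exists i : 'I_h, b i != 0) ->
      forall y : 'I_h -> R,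
        (forall i j : 'I_h, (i < j)%N ->
           (eta - delta) ^+ (e j - e i) <= y j ^+ e j / y i ^+ e i
           <= (eta + delta) ^+ (e j - e i)) ->
        eps <= `| \sum_(i < h) (b i)%:~R * y i ^+ e i |.
Proof.
move=> e1 tr; case: h => [|n].
  exists 1, 1; split => //; split => // e b _ _ _ [i]; by case: i.
have [d0 [eps [d00 d0le eps0 eps1 H]]] := @main_ind R eta m n.+1 e1 tr.
exists d0, eps; split => //; split => // e b e0 einc bm [i0 bi0] y hy.
pose E k := e (inord k). pose B k := b (inord k). pose Yf k := y (inord k) ^+ e (inord k).
have E0 : E 0%N = 0%N by rewrite /E; apply: e0; rewrite inordK.
have Yf0 : Yf 0%N = 1 by rewrite /Yf -/(E 0%N) E0 expr0.
have g : good eta m n.+1 d0 E B Yf.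
  split.
  - move=> i j /andP[ij jn]; apply: einc; rewrite !inordK //; exact: ltn_trans ij jn.
  - by move=> i _; apply: bm.
  - by exists (nat_of_ord i0); [exact: ltn_ord | rewrite /B inord_val].
  - move=> [|i] il; first by rewrite Yf0 ltr01.
    have := hy (inord 0) (inord i.+1); rewrite !inordK // => /(_ isT) /andP[hl _].
    move: hl; rewrite -/(E 0%N) E0 expr0 divr1 -/(Yf i.+1) subn0 => hl.
    apply: lt_le_trans hl; apply: exprn_gt0; lra.
  - move=> i j /andP[ij jn].
    have := hy (inord i) (inord j); rewrite !inordK //; last exact: ltn_trans ij jn.
    by move=> /(_ ij).
have := H n.+1 (leqnn _) d0 _ E B Yf g.
rewrite Yf0 mulr1 => /(_ _); rewrite lexx ltW // => /(_ isT) hh.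
apply: le_trans hh _; rewrite le_eqVlt; apply/orP; left; apply/eqP; congr (`| _ |).
by apply: eq_bigr => i _; rewrite /B /Yf inord_val.
Qed.
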